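(* Let $\epsilon>0$, $M\ge1$, and let $h^{\mathrm{Dir}}$ be the solution of the Dirichlet problem on ${\mathbb T}^{(M)}$ with the boundary condition $u$ below. Then $$\epsilon^2\,\frac{2^{2M-6}}{(1-2^{-M})^2}\le S_{\mathrm{spr}}(h^{\mathrm{Dir}},{\mathbb T}^{(M)})\le\epsilon^2\,\frac{(2^{M-1}+\tfrac12)^2}{1-2^{-M}}.$$
   Context: Binary tree: for $n\ge0$, $\{0,1\}^n$ is the set of vertices of generation $n$ (words $z=z_1\cdots z_n$; generation $0$ is the root $\emptyset$). For a vertex $z$ of generation $n$, its children are $z0,z1$, and for $0\le m\le n$, $z^{(m)}=z_1\cdots z_m$ is its ancestor in generation $m$. ${\mathbb T}^{(M)}$ is the tree of generations $0,\dots,M$. $S_{\mathrm{spr}}(h,{\mathbb T}^{(M)})=\tfrac12\sum_{n=0}^{M-1}\sum_{z\in\{0,1\}^n}\big[(h(z0)-h(z))^2+(h(z1)-h(z))^2\big]$. Dirichlet problem: given $M\ge1$ and $u:\{0,1\}^M\to\mathbb R$, its solution is the unique $h$ on the vertices of ${\mathbb T}^{(M)}$ with $h(\emptyset)=0$, $h(z)=u(z)$ for $z\in\{0,1\}^M$, and $h(z0)+h(z1)+h(z^{(n-1)})=3h(z)$ for all $z\in\{0,1\}^n$, $1\le n<M$. Boundary condition: $u(z)=\epsilon\sum_{\ell=2}^M2^{M-\ell}z_\ell+\tfrac12\epsilon$ if $z_1=1$, and $u(z)=-\epsilon\sum_{\ell=2}^M2^{M-\ell}z_\ell-\tfrac12\epsilon$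 if $z_1=0$. *)

(* Defs.v *)
From HB Require Import structures.
From mathcomp Require Import all_boot all_order all_algebra.
Set Implicit Arguments. Unset Strict Implicit. Unset Printing Implicit Defensive.
Import Order.TTheory GRing.Theory Num.Theory.
Local Open Scope ring_scope.

(* Vertices of the binary tree are words z : seq bool; generation n = words of
   size n, enumerated as n.-tuple bool.  The root is [::]; the children of z
   are rcons z false (z0) and rcons z true (z1); the ancestor of z in
   generation m is take m z. *)

Section Tree.
Variable R : realFieldType.

Definition S_spr (M : nat) (h : seq bool -> R) : R :=
  2^-1 * \sum_(n < M) \sum_(z : n.-tuple bool)
    ((h (rcons z false) - h z) ^+ 2 + (h (rcons z true) - h z) ^+ 2).

Definition is_dirichlet_solution (M : nat) (u h : seq bool -> R) : Prop :=
  [/\ h [::] = 0,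
      (forall z : M.-tuple bool, h z = u z) &
      (forall (n : nat), (1 <= n < M)%N -> forall z : n.-tuple bool,
          h (rcons z false) + h (rcons z true) + h (take n.-1 z) = 3 * h z)].

(* letter z_l (1-indexed) of the word z *)
Definition letter (z : seq bool) (l : nat) : R := (nth false z l.-1 : nat)%:R.

Definition bdry_u (eps : R) (M : nat) (z : seq bool) : R :=
  let s := \sum_(2 <= l < M.+1) (2 ^+ (M - l)) * letter z l in
  if nth false z 0 then eps * s + 2^-1 * eps else - (eps * s) - 2^-1 * eps.

End Tree.

(* Main.v *)
Require Import Defs.
From HB Require Import structures.
From mathcomp Require Import all_boot all_order all_algebra.
From mathcomp Require Import lra ring.
Import Order.TTheory GRing.Theory Num.Theory.
Local Open Scope ring_scope.

Section Aux.
Variable R : realFieldType.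

Lemma sum_t0 (G : seq bool -> R) : \sum_(z : 0.-tuple bool) G z = G [::].
Proof. by rewrite (big_pred1 [tuple]) // => z; rewrite /= [z]tuple0; apply/esym/eqP. Qed.

Lemma sum_cons n (F : seq bool -> R) :
  \sum_(t : n.+1.-tuple bool) F t =
  \sum_(z : n.-tuple bool) (F (false :: z) + F (true :: z)).
Proof.
rewrite (reindex (fun p : bool * n.-tuple bool => [tuple of p.1 :: p.2])) /=; last first.
  apply: onW_bij; exists (fun t => (thead t, [tuple of behead t])).
    by move=> [b z]; rewrite /= theadE; congr pair; apply: val_inj.
  by move=> t; rewrite /= -tuple_eta.
rewrite -(pair_big xpredT xpredT (fun b (z : n.-tuple bool) => F (b :: z))) /=.
rewrite big_bool /= -big_split /=.
by apply: eq_bigr => z _; rewrite addrC.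
Qed.

Lemma sum_rcons n (F : seq bool -> R) :
  \sum_(t : n.+1.-tuple bool) F t =
  \sum_(z : n.-tuple bool) (F (rcons z false) + F (rcons z true)).
Proof.
elim: n F => [|n IH] F; first by rewrite sum_cons (sum_t0 (fun z => F (false :: z) + F (true :: z))) (sum_t0 (fun z => F (rcons z false) + F (rcons z true))).
rewrite sum_cons big_split /= (IH (fun z => F (false :: z))) (IH (fun z => F (true :: z))).
rewrite -big_split /= (sum_cons _ (fun z => F (rcons z false) + F (rcons z true))) /=.
by apply: eq_bigr => z _; rewrite addrACA.
Qed.

Lemma sum_const_t n (c : R) : \sum_(z : n.-tuple bool) c = 2 ^+ n * c.
Proof.
elim: n => [|n IH]; first by rewrite (sum_t0 (fun _ => c)) expr0 mul1r.
by rewrite (sum_cons _ (fun _ => c)) big_split /= IH exprS; ring.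
Qed.

Lemma sum_letter n k : (k < n)%N ->
  \sum_(t : n.-tuple bool) ((nth false t k : nat)%:R : R) = 2 ^+ n.-1.
Proof.
elim: n k => [|n IH] k // lt.
rewrite (sum_cons _ (fun t => ((nth false t k : nat)%:R : R))) /=.
case: k lt => [|k] lt /=.
  by rewrite (eq_bigr (fun _ => 1)) ?sum_const_t ?mulr1 // => z _; rewrite add0r.
rewrite (eq_bigr (fun z : n.-tuple bool => 2 * (nth false z k : nat)%:R)); last by move=> z _; ring.
rewrite -mulr_sumr IH //; case: n IH lt => // n _ _; by rewrite exprS.
Qed.

Lemma telesc (M : nat) (A B : nat -> R) :
  (forall n, (0 < n <= M)%N -> A n = B n) ->
  \sum_(n < M.+1) (A n.+1 - B n) = A M.+1 - B 0%N.
Proof.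
elim: M => [|M IH] H; first by rewrite big_ord1.
rewrite big_ord_recr /= IH; last by move=> n /andP[a b]; apply: H; rewrite a ltnW.
rewrite (H M.+1) ?leqnn //; ring.
Qed.

Lemma geo M : \sum_(n < M) (2^-1 : R) ^+ n.+1 = 1 - 2^-1 ^+ M.
Proof.
elim: M => [|M IH]; first by rewrite big_ord0 expr0 subrr.
by rewrite big_ord_recr /= IH exprS; field.
Qed.

Lemma geo2 m : \sum_(2 <= l < m.+2) (2 : R) ^+ (m.+1 - l) = 2 ^+ m - 1.
Proof.
elim: m => [|m IH]; first by rewrite big_geq // expr0 subrr.
rewrite big_nat_recr //= subnn expr0.
rewrite (eq_big_nat _ _ (F2 := fun l => 2 * 2 ^+ (m.+1 - l))); last first.
  by move=> l /andP[_ hl]; rewrite subSn // exprS.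
by rewrite -mulr_sumr IH exprS; ring.
Qed.


Definition sgn (w : seq bool) : R := if nth false w 0 then 1 else -1.

Lemma sgn_rcons (z : seq bool) b : (0 < size z)%N -> sgn (rcons z b) = sgn z.
Proof. by move=> hz; rewrite /sgn nth_rcons hz. Qed.

Lemma sgn_sq w : sgn w ^+ 2 = 1.
Proof. by rewrite /sgn; case: ifP => _; rewrite ?expr1n ?sqrrN ?expr1n. Qed.

Definition Vs (M : nat) (w : seq bool) : R :=
  \sum_(2 <= l < M.+1) 2 ^+ (M - l) * letter R w l.

Lemma Vs_rcons M (z : seq bool) b : (0 < size z)%N -> (size z < M)%N ->
  Vs M (rcons z b) = Vs M z + 2 ^+ (M - (size z).+1) * (b : nat)%:R.
Proof.
move=> h1 h2; set n := size z; rewrite /Vs.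
have c1 : (2 <= n.+1)%N by [].
have c2 : (n.+1 <= M.+1)%N by rewrite ltnS ltnW.
rewrite (@big_cat_nat _ _ _ n.+1 2 M.+1) // (@big_cat_nat _ _ _ n.+1 2 M.+1) //.
rewrite (@big_ltn _ _ _ n.+1 M.+1) // (@big_ltn _ _ _ n.+1 M.+1) //.
have e1 : \sum_(2 <= l < n.+1) 2 ^+ (M - l) * letter R (rcons z b) l =
          \sum_(2 <= l < n.+1) 2 ^+ (M - l) * letter R z l.
  apply: eq_big_nat => l /andP[hl1 hl2]; rewrite /letter nth_rcons.
  by case: l hl1 hl2 => // l _ hl; rewrite /= ifT.
have e3 : forall w : seq bool, (size w <= n.+1)%N ->
    \sum_(n.+2 <= l < M.+1) 2 ^+ (M - l) * letter R w l = 0.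
  move=> w hw; rewrite big_nat_cond big1 // => l /andP[/andP[hl _] _].
  rewrite /letter nth_default ?mulr0 //.
  by case: l hl => // l hl /=; apply: leq_trans hw _.
rewrite /=.
rewrite e1 !e3 ?size_rcons // ?leqnSn //.
rewrite /letter /= nth_rcons ltnn eqxx nth_default ?leqnn //.
by rewrite mulr0 !addr0.
Qed.

Lemma Vs_short M b : Vs M [:: b] = 0.
Proof.
rewrite /Vs big_nat_cond big1 // => l /andP[/andP[hl _] _].
by case: l hl => [|[|l]] // _; rewrite /letter /= nth_nil mulr0.
Qed.


Lemma size_t n (z : n.-tuple bool) : size z = n. Proof. exact: size_tuple. Qed.

Lemma take_rc n (z : n.-tuple bool) b : take n (rcons z b) = z.
Proof. by rewrite -cats1 take_size_cat ?size_t. Qed.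

Lemma edge_telesc m (a : seq bool -> R) (c : seq bool -> R) :
  (forall n, (0 < n <= m)%N ->
     \sum_(w : n.-tuple bool) a w = \sum_(z : n.-tuple bool) c z) ->
  \sum_(n < m.+1) \sum_(z : n.-tuple bool)
     (a (rcons z false) + a (rcons z true) - c z)
  = \sum_(w : m.+1.-tuple bool) a w - \sum_(z : 0.-tuple bool) c z.
Proof.
move=> H.
rewrite (eq_bigr (fun n : 'I_m.+1 =>
   (fun k => \sum_(w : k.-tuple bool) a w) (nat_of_ord n).+1 -
   (fun k => \sum_(z : k.-tuple bool) c z) (nat_of_ord n))).
  by rewrite (@telesc m (fun k => \sum_(w : k.-tuple bool) a w)
                     (fun k => \sum_(z : k.-tuple bool) c z) H).
by move=> n _ /=; rewrite sumrB sum_rcons.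
Qed.

Definition phi (w : seq bool) : R := sgn w * 2^-1 ^+ size w.

Lemma lower_X m (h : seq bool -> R) : h [::] = 0 ->
  \sum_(n < m.+1) \sum_(z : n.-tuple bool)
    (phi (rcons z false) * (h (rcons z false) - h z) +
     phi (rcons z true) * (h (rcons z true) - h z))
  = \sum_(w : m.+1.-tuple bool) phi w * h w.
Proof.
move=> h0.
rewrite (eq_bigr (fun n : 'I_m.+1 => \sum_(z : n.-tuple bool)
    ((fun w => phi w * h w) (rcons z false) + (fun w => phi w * h w) (rcons z true)
     - (fun w => (phi (rcons w false) + phi (rcons w true)) * h w) z))); last first.
  by move=> n _; apply: eq_bigr => z _ /=; ring.
rewrite (@edge_telesc m (fun w => phi w * h w) (fun w => (phi (rcons w false) + phi (rcons w true)) * h w)).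
  by rewrite (sum_t0 (fun w => (phi (rcons w false) + phi (rcons w true)) * h w)) h0 mulr0 subr0.
move=> n /andP[n0 _]; apply: eq_bigr => z _.
have hz : (0 < size z)%N by rewrite size_t.
rewrite /phi !sgn_rcons // !size_rcons exprS; congr (_ * _).
by field.
Qed.

Lemma cross m (h d : seq bool -> R) :
  d [::] = 0 -> (forall z : m.+1.-tuple bool, d z = 0) ->
  (forall (n : nat), (1 <= n < m.+1)%N -> forall z : n.-tuple bool,
          h (rcons z false) + h (rcons z true) + h (take n.-1 z) = 3 * h z) ->
  \sum_(n < m.+1) \sum_(z : n.-tuple bool)
    ((h (rcons z false) - h z) * (d (rcons z false) - d z) +
     (h (rcons z true) - h z) * (d (rcons z true) - d z)) = 0.
Proof.
move=> d0 dM hH.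
rewrite (eq_bigr (fun n : 'I_m.+1 => \sum_(z : n.-tuple bool)
    ((fun w => d w * (h w - h (take (size w).-1 w))) (rcons z false)
     + (fun w => d w * (h w - h (take (size w).-1 w))) (rcons z true)
     - (fun w => d w * (h (rcons w false) + h (rcons w true) - 2 * h w)) z))); last first.
  move=> n _; apply: eq_bigr => z _ /=.
  by rewrite !size_rcons /= !size_t !take_rc; ring.
rewrite (@edge_telesc m (fun w => d w * (h w - h (take (size w).-1 w))) (fun w => d w * (h (rcons w false) + h (rcons w true) - 2 * h w))).
  rewrite (sum_t0 (fun w => d w * (h (rcons w false) + h (rcons w true) - 2 * h w))) d0 mul0r subr0.
  by rewrite big1 // => w _; rewrite dM mul0r.
move=> n /andP[n0 nm]; apply: eq_bigr => z _; congr (_ * _).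
have := hH n _ z; rewrite size_t n0 => /(_ nm) E.
lra.
Qed.

Lemma leaf_sum m (eps : R) :
  \sum_(w : m.+1.-tuple bool) sgn w * bdry_u eps m.+1 w = eps * (2 ^+ m) ^+ 2.
Proof.
rewrite (eq_bigr (fun w : m.+1.-tuple bool => eps * Vs m.+1 w + 2^-1 * eps)); last first.
  by move=> w _; rewrite /sgn /bdry_u -/(Vs _ _); case: ifP => _; ring.
rewrite big_split /= sum_const_t -mulr_sumr /Vs exchange_big /=.
rewrite (eq_big_nat _ _ (F2 := fun l => 2 ^+ (m.+1 - l) * 2 ^+ m)); last first.
  move=> l /andP[l2 lm]; rewrite -mulr_sumr; congr (_ * _).
  rewrite /letter sum_letter //.
  by case: l l2 lm.
by rewrite -mulr_suml geo2 exprS; field.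
Qed.


Lemma bdry_sgn eps M w :
  bdry_u eps M w = sgn w * (eps * Vs M w + 2^-1 * eps).
Proof. by rewrite /bdry_u /sgn -/(Vs M w); case: ifP => _; ring. Qed.

Definition gt (eps : R) M (w : seq bool) : R :=
  if size w == 0%N then 0 else bdry_u eps M w.

Lemma Sg_bound m eps :
  S_spr m.+1 (gt eps m.+1) <= eps ^+ 2 * (2^-1 + (2 ^+ m) ^+ 2).
Proof.
rewrite /S_spr.
set P := (2 : R) ^+ m.
have P1 : 1 <= P by rewrite /P exprn_ege1 // ler1n.
have bnd : forall n : 'I_m.+1,
    \sum_(z : n.-tuple bool) ((gt eps m.+1 (rcons z false) - gt eps m.+1 z) ^+ 2
       + (gt eps m.+1 (rcons z true) - gt eps m.+1 z) ^+ 2)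
    <= (1 + 2 * P ^+ 2) * eps ^+ 2 * 2^-1 ^+ n.+1.
  case=> [[|k] hk] /=.
    rewrite (sum_t0 (fun z => (gt eps m.+1 (rcons z false) - gt eps m.+1 z) ^+ 2
       + (gt eps m.+1 (rcons z true) - gt eps m.+1 z) ^+ 2)).
    rewrite /gt /= !bdry_sgn !Vs_short /sgn /=.
    have -> : (- 1 * (eps * 0 + 2^-1 * eps) - 0) ^+ 2 + (1 * (eps * 0 + 2^-1 * eps) - 0) ^+ 2
       = 1 * eps ^+ 2 * 2^-1 ^+ 1 by field.
    apply: ler_wpM2r; first by rewrite exprn_ge0 // invr_ge0 ler0n.
    apply: ler_wpM2r; first by rewrite sqr_ge0.
    by rewrite lerDl mulr_ge0 // sqr_ge0.
  rewrite (eq_bigr (fun _ => eps ^+ 2 * (2 ^+ (m.+1 - k.+2)) ^+ 2)); last first.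
    move=> z _; rewrite /gt !size_rcons size_t /= !bdry_sgn !Vs_rcons ?size_t //.
    rewrite !sgn_rcons ?size_t //.
    have sq := sgn_sq z.
    rewrite /=; set s := sgn z; set V := Vs m.+1 z.
    rewrite mulr0 mulr1; transitivity (s ^+ 2 * (eps ^+ 2 * 2 ^+ (m.+1 - k.+2) ^+ 2)); first ring.
    by rewrite /s sq mul1r.
  rewrite sum_const_t /P.
  have [j ->] : exists j, m = (k.+1 + j)%N by exists (m - k.+1)%N; rewrite subnKC.
  rewrite subSS addKn exprD exprVn.
  have -> : 2 ^+ k.+1 * (eps ^+ 2 * 2 ^+ j ^+ 2) =
     2 * (2 ^+ k.+1 * 2 ^+ j) ^+ 2 * eps ^+ 2 * (2 ^+ k.+2)^-1 :> R.
    rewrite (exprS _ k.+1) exprMn; field.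
    by rewrite expf_neq0 // pnatr_eq0.
  apply: (ler_wpM2r (x := (2 ^+ k.+2)^-1)); first by rewrite invr_ge0 exprn_ge0 // ler0n.
  apply: (ler_wpM2r (x := eps ^+ 2)); first by rewrite sqr_ge0.
  by rewrite lerDr ler01.
apply: le_trans (ler_wpM2l _ (ler_sum _ (fun n _ => bnd n))) _.
  by rewrite invr_ge0 ler0n.
rewrite -mulr_sumr geo.
have q0 : 0 <= (2^-1 : R) ^+ m.+1 by rewrite exprn_ge0 // invr_ge0 ler0n.
have : (1 + 2 * P ^+ 2) * eps ^+ 2 * (1 - 2^-1 ^+ m.+1) <= (1 + 2 * P ^+ 2) * eps ^+ 2.
  rewrite ler_piMr //; first by rewrite mulr_ge0 ?sqr_ge0 // addr_ge0 // mulr_ge0 // sqr_ge0.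
  by rewrite lerBlDr lerDl.
move=> H; apply: le_trans (ler_wpM2l _ H) _; first by rewrite invr_ge0 ler0n.
by rewrite le_eqVlt; apply/orP; left; apply/eqP; field.
Qed.


Lemma S_mono m (h g : seq bool -> R) :
  g [::] = h [::] -> (forall z : m.+1.-tuple bool, g z = h z) ->
  (forall (n : nat), (1 <= n < m.+1)%N -> forall z : n.-tuple bool,
          h (rcons z false) + h (rcons z true) + h (take n.-1 z) = 3 * h z) ->
  S_spr m.+1 h <= S_spr m.+1 g.
Proof.
move=> e0 eM hH; rewrite /S_spr.
apply: ler_wpM2l; first by rewrite invr_ge0 ler0n.
have C := @cross m h (fun w => g w - h w).
rewrite e0 subrr in C; have {C} C := C erefl.
have {C} C := C (fun z => etrans (f_equal (fun x => x - h z) (eM z)) (subrr _)).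
have {C} C := C hH.
apply: le_trans (_ : _ <= \sum_(n < m.+1) \sum_(z : n.-tuple bool)
   ((h (rcons z false) - h z) ^+ 2 + (h (rcons z true) - h z) ^+ 2 +
    2 * ((h (rcons z false) - h z) * ((g (rcons z false) - h (rcons z false)) - (g z - h z)) +
     (h (rcons z true) - h z) * ((g (rcons z true) - h (rcons z true)) - (g z - h z))))) _.
  rewrite le_eqVlt; apply/orP; left; apply/eqP.
  rewrite [RHS](eq_bigr (fun n : 'I_m.+1 =>
     \sum_(z : n.-tuple bool) ((h (rcons z false) - h z) ^+ 2 + (h (rcons z true) - h z) ^+ 2)
     + 2 * \sum_(z : n.-tuple bool)
       ((h (rcons z false) - h z) * ((g (rcons z false) - h (rcons z false)) - (g z - h z)) +
        (h (rcons z true) - h z) * ((g (rcons z true) - h (rcons z true)) - (g z - h z))))); last first.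
    by move=> n _; rewrite mulr_sumr -big_split.
  by rewrite big_split /= -mulr_sumr C mulr0 addr0.
apply: ler_sum => n _; apply: ler_sum => z _.
set a0 := h (rcons z false) - h z; set a1 := h (rcons z true) - h z.
set b0 := (g (rcons z false) - h (rcons z false)) - (g z - h z).
set b1 := (g (rcons z true) - h (rcons z true)) - (g z - h z).
have -> : g (rcons z false) - g z = a0 + b0 by rewrite /a0 /b0; ring.
have -> : g (rcons z true) - g z = a1 + b1 by rewrite /a1 /b1; ring.
have s0 := sqr_ge0 b0; have s1 := sqr_ge0 b1.
rewrite -subr_ge0.
have -> : (a0 + b0) ^+ 2 + (a1 + b1) ^+ 2 - (a0 ^+ 2 + a1 ^+ 2 + 2 * (a0 * b0 + a1 * b1))
   = b0 ^+ 2 + b1 ^+ 2 by ring.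
by rewrite addr_ge0.
Qed.

End Aux.

Theorem lemma2p5 (R : realFieldType) (eps : R) (M : nat) (h : seq bool -> R) :
  0 < eps -> (1 <= M)%N ->
  is_dirichlet_solution M (bdry_u eps M) h ->
  eps ^+ 2 * ((2 : R) ^ ((2 * M)%:Z - 6) / (1 - (2 : R) ^- M) ^+ 2)
    <= S_spr M h
  /\ S_spr M h
    <= eps ^+ 2 * ((2 ^+ M.-1 + 2^-1) ^+ 2 / (1 - (2 : R) ^- M)).
Proof.
move=> heps hM [h0 hleaf hharm].
case: M hM hleaf hharm => // m _ hleaf hharm.
rewrite /=; have eT : (2:R) ^- m.+1 = 2^-1 ^+ m.+1 by rewrite exprVn.
rewrite eT.
set q : R := 2^-1.
have q0 : 0 < q by rewrite /q invr_gt0 ltr0n.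
have q1 : q <= 1 by rewrite /q invf_le1 ?ler1n ?ltr0n.
have qm : q ^+ m <= 1 by apply: exprn_ile1 => //; exact: ltW.
have qM : q ^+ m.+1 <= q by rewrite exprSr ler_piMl // ltW.
set T := 1 - q ^+ m.+1.
have T0 : 0 < T by rewrite /T subr_gt0; apply: le_lt_trans qM _; rewrite invf_lt1 ?ltr0n // ltr1n.
have T1 : 1 <= 2 * T by rewrite /T; move: qM; rewrite /q => qM'; rewrite -/q; lra.
have T2 : T <= 1 by rewrite /T lerBlDr lerDl exprn_ge0 // ltW.
set P : R := 2 ^+ m.
have P1 : 1 <= P by rewrite /P exprn_ege1 // ler1n.
have qP : q ^+ m * P = 1 by rewrite /q /P exprVn mulVf // expf_neq0 // pnatr_eq0.
split.
-
  have pw : (2 : R) ^ ((2 * m.+1)%:Z - 6) = P ^+ 2 / 16.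
    have -> : ((2 * m.+1)%:Z - 6 = (2 * m)%:Z + (-4))%R by rewrite mulnS PoszD; ring.
    rewrite expfzDr ?pnatr_eq0 //.
    have -> : (2:R) ^ (-4) = (2 ^+ 4)^-1 by [].
    have -> : (2:R) ^ (2 * m)%:Z = 2 ^+ (2 * m) by [].
    by rewrite /P -exprM mulnC; field.
  rewrite pw.
  set X := \sum_(n < m.+1) \sum_(z : n.-tuple bool)
    (phi R (rcons z false) * (h (rcons z false) - h z) +
     phi R (rcons z true) * (h (rcons z true) - h z)).
  have HX : X = eps * P / 2.
    rewrite /X lower_X //.
    rewrite (eq_bigr (fun w : m.+1.-tuple bool => q ^+ m.+1 * (sgn R w * bdry_u eps m.+1 w))); last first.
      by move=> w _; rewrite /phi size_t hleaf; ring.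
    rewrite -mulr_sumr leaf_sum.
    transitivity (eps * P / 2 * (q ^+ m * P)); last by rewrite qP mulr1.
    by rewrite exprS /q /P; field.
  set L := X / T.
  have HY : 2 * L * X - L ^+ 2 * T <=
      \sum_(n < m.+1) \sum_(z : n.-tuple bool)
        ((h (rcons z false) - h z) ^+ 2 + (h (rcons z true) - h z) ^+ 2).
    have ET : \sum_(n < m.+1) \sum_(z : n.-tuple bool)
       (phi R (rcons z false) ^+ 2 + phi R (rcons z true) ^+ 2) = T.
      rewrite /T -geo; apply: eq_bigr => n _.
      rewrite (eq_bigr (fun _ => 2 * q ^+ (2 * n.+1))); last first.
        by move=> z _; rewrite /phi !exprMn !sgn_sq !size_rcons size_t !mul1r -!exprM mulnC; ring.
      rewrite sum_const_t /q mul2n -addnn exprD !exprVn !exprS; field.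
      by rewrite expf_neq0 // pnatr_eq0.
    apply: le_trans (_ : 2 * L * X - L ^+ 2 * T <= \sum_(n < m.+1) \sum_(z : n.-tuple bool)
        (2 * L * (phi R (rcons z false) * (h (rcons z false) - h z) +
                  phi R (rcons z true) * (h (rcons z true) - h z))
         - L ^+ 2 * (phi R (rcons z false) ^+ 2 + phi R (rcons z true) ^+ 2))) _.
      rewrite le_eqVlt; apply/orP; left; apply/eqP.
      rewrite -ET /X !mulr_sumr -sumrB; apply: eq_bigr => n _.
      by rewrite !mulr_sumr -sumrB.
    apply: ler_sum => n _; apply: ler_sum => z _.
    set e0 := h (rcons z false) - h z; set e1 := h (rcons z true) - h z.
    set f0 := phi R (rcons z false); set f1 := phi R (rcons z true).
    rewrite -subr_ge0.
    have -> : e0 ^+ 2 + e1 ^+ 2 - (2 * L * (f0 * e0 + f1 * e1) - L ^+ 2 * (f0 ^+ 2 + f1 ^+ 2))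
       = (e0 - L * f0) ^+ 2 + (e1 - L * f1) ^+ 2 by ring.
    by rewrite addr_ge0 // sqr_ge0.
  rewrite /S_spr; apply: le_trans (ler_wpM2l _ HY); last by rewrite invr_ge0 ler0n.
  set Z := eps ^+ 2 * (P ^+ 2 / 16 / T ^+ 2).
  have -> : 2^-1 * (2 * L * X - L ^+ 2 * T) = Z * (2 * T).
    by rewrite /L HX /Z; field; rewrite lt0r_neq0.
  apply: ler_peMr => //.
  by rewrite /Z mulr_ge0 ?sqr_ge0 // mulr_ge0 // ?divr_ge0 ?sqr_ge0 ?ler0n // invr_ge0 sqr_ge0.
-
  apply: le_trans (@S_mono R m h (gt R eps m.+1) _ _ hharm) _.
  + by rewrite /gt /= h0.
  + by move=> z; rewrite /gt size_t /= hleaf.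
  apply: le_trans (Sg_bound R m eps) _.
  rewrite -/P; apply: ler_wpM2l; first by rewrite sqr_ge0.
  apply: le_trans (_ : _ <= (P + 2^-1) ^+ 2) _.
    rewrite -subr_ge0.
    have -> : (P + 2^-1) ^+ 2 - (2^-1 + P ^+ 2) = P - 4^-1 by field.
    rewrite subr_ge0; apply: le_trans P1; rewrite invf_le1 ?ler1n ?ltr0n //.
  apply: ler_peMr; first by rewrite sqr_ge0.
  by rewrite invf_ge1.
Qed.
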